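(* Let $\{x^k\}$ be generated by the ABP algorithm described in the context, and assume (A1)–(A7): (A1) $\mathcal F$ is continuously differentiable; (A2) $C$, $Q$ nonempty closed convex, $z_i^*>-\infty$ for each $i$; (A3) each $f_i$ convex; (A4) $\Omega\ne\emptyset$; (A5) $\lambda_k>0$, $\sum\lambda_k=\infty$, $\sum\lambda_k^2<\infty$; (A6) $0<\underline\alpha\le\alpha_k\le\bar\alpha$, $0<\underline\beta\le\beta_k\le\bar\beta$, $0<\underline\gamma\le\gamma_k\le\bar\gamma$ for all $k$; (A7) $\varphi_{\mathrm{lb}}=\varphi^*$. Then for every $x^*\in\Omega$ the sequence $\{\|x^k-x^*\|^2\}$ converges; in particular $\{x^k\}$ is bounded.
   Context: Let $n,m\ge1$, $\mathcal F=(f_1,\dots,f_m)\colon\mathbb R^n\to\mathbb R^m$, $C\subset\mathbb R^n$, $Q\subset\mathbb R^m$, $Q^+:=Q-\mathbb R^m_+=\{y-u:y\in Q,u\in\mathbb R^m_+\}$; $P_S$ is Euclidean projection onto a nonempty closed convex set $S$. Let $z_i^*:=\inf_{x\in C}f_i(x)$, fix $r$ with $r_i>0$, $\sum r_i=1$. Define $\varphi(x):=\max_ir_i(f_i(x)-z_i^* )$, $H(x):=\tfrac12\mathrm{dist}^2(x,C)$, $G(x):=\tfrac12\mathrm{dist}^2(\mathcal F(x),Q^+)$, $\mathcal S:=\{x:H(x)=0,G(x)=0\}$, $\varphi^*:=\inf_{\mathcal S}\varphi$, $\Omega:=\{x\in\mathcal S:\varphi(x)=\varphi^*\}$, $\varphi_{\mathrm{lb}}:=\inf_C\varphi$.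 ABP algorithm: given $x^0$, $\mu>0$, positive sequences $\{\alpha_k\},\{\beta_k\},\{\gamma_k\},\{\lambda_k\}$: $p^k:=P_{Q^+}(\mathcal F(x^k))$, $\rho^k:=\mathcal F(x^k)-p^k$, $z^k:=x^k-P_C(x^k)$, $v^k:=J_{\mathcal F}(x^k)^T\rho^k$, $w^k:=r_{i^*}\nabla f_{i^*}(x^k)$ with arbitrary $i^*\in\arg\max_ir_i(f_i(x^k)-z_i^* )$, $\Delta_k:=\varphi(x^k)-\varphi_{\mathrm{lb}}$, $d^k:=\alpha_k\mathbf 1_{\{\Delta_k\ge0\}}w^k+\beta_kz^k+\gamma_kv^k$, $\eta_k:=\max(\mu,\|d^k\|)$, $x^{k+1}:=x^k-(\lambda_k/\eta_k)d^k$. *)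

(* Defs.v *)
From HB Require Import structures.
From mathcomp Require Import all_boot all_order all_algebra.
From mathcomp Require Import all_classical all_reals all_analysis.
Set Implicit Arguments. Unset Strict Implicit. Unset Printing Implicit Defensive.
Import Order.TTheory GRing.Theory Num.Theory.
Import numFieldNormedType.Exports.
Local Open Scope classical_set_scope.
Local Open Scope ring_scope.

Section ABP.
Variable R : realType.

Definition dotp n (u v : 'rV[R]_n) : R := \sum_(j < n) u 0 j * v 0 j.
Definition enorm n (v : 'rV[R]_n) : R := Num.sqrt (dotp v v).

Definition dist n (x : 'rV[R]_n) (S : set 'rV[R]_n) : R :=
  inf [set enorm (x - y) | y in S].

Definition is_proj n (S : set 'rV[R]_n) (x p : 'rV[R]_n) : Prop :=
  S p /\ forall y, S y -> enorm (x - p) <= enorm (x - y).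

Definition convex_fun n (f : 'rV[R]_n -> R) : Prop :=
  forall x y (t : R), 0 <= t <= 1 ->
    f (t *: x + (1 - t) *: y) <= t * f x + (1 - t) * f y.

Definition Qplus m (Q : set 'rV[R]_m) : set 'rV[R]_m :=
  [set z | exists (y u : 'rV[R]_m), Q y /\ (forall i, 0 <= u 0 i) /\ z = y - u].

Definition fcomp n m (F : 'rV[R]_n -> 'rV[R]_m) (i : 'I_m) : 'rV[R]_n -> R :=
  fun x => F x 0 i.

(* Jacobian: we use the library's [jacobian F x : 'M_(n, m)] (= lin1_mx ('d F x)),
   which is the TRANSPOSE of the paper's J_F(x) (m x n); so J_F(x)^T rho is
   rho *m (jacobian F x)^T as a row vector. *)
Definition gradi n m (F : 'rV[R]_n -> 'rV[R]_m) (i : 'I_m) (x : 'rV[R]_n) : 'rV[R]_n :=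
  (col i (jacobian F x))^T.

Definition maxI m (g : 'I_m -> R) : R :=
  \big[Num.max/head 0 [seq g i | i <- enum 'I_m]]_(i < m) g i.

Definition zstar n m (F : 'rV[R]_n -> 'rV[R]_m) (C : set 'rV[R]_n) (i : 'I_m) : R :=
  inf [set fcomp F i x | x in C].

Definition varphi n m (F : 'rV[R]_n -> 'rV[R]_m) (C : set 'rV[R]_n) (r : 'I_m -> R)
  (x : 'rV[R]_n) : R :=
  maxI (fun i => r i * (fcomp F i x - zstar F C i)).

Definition Hfun n (C : set 'rV[R]_n) (x : 'rV[R]_n) : R := 2^-1 * dist x C ^+ 2.
Definition Gfun n m (F : 'rV[R]_n -> 'rV[R]_m) (Q : set 'rV[R]_m) (x : 'rV[R]_n) : R :=
  2^-1 * dist (F x) (Qplus Q) ^+ 2.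

Definition Sfeas n m (F : 'rV[R]_n -> 'rV[R]_m) C Q : set 'rV[R]_n :=
  [set x | Hfun C x = 0 /\ Gfun F Q x = 0].

Definition phistar n m (F : 'rV[R]_n -> 'rV[R]_m) C Q r : R :=
  inf [set varphi F C r x | x in Sfeas F C Q].

Definition Omega n m (F : 'rV[R]_n -> 'rV[R]_m) C Q r : set 'rV[R]_n :=
  [set x | Sfeas F C Q x /\ varphi F C r x = phistar F C Q r].

Definition phi_lb n m (F : 'rV[R]_n -> 'rV[R]_m) (C : set 'rV[R]_n) r : R :=
  inf [set varphi F C r x | x in C].

(* ABP direction d^k, given x = x^k, p = P_{Q^+}(F x^k), pC = P_C(x^k), i = i^*,
   and a = alpha_k, b = beta_k, c = gamma_k. *)
Definition abp_dir n m (F : 'rV[R]_n -> 'rV[R]_m) (C : set 'rV[R]_n) (r : 'I_m -> R)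
  (a b c : R) (x : 'rV[R]_n) (p : 'rV[R]_m) (pC : 'rV[R]_n) (i : 'I_m) : 'rV[R]_n :=
  let rho := F x - p in
  let z := x - pC in
  let v := rho *m (jacobian F x)^T in
  let w := r i *: gradi F i x in
  (if 0 <= varphi F C r x - phi_lb F C r then a else 0) *: w + b *: z + c *: v.
End ABP.

(* Main.v *)
Require Import Defs.
From HB Require Import structures.
From mathcomp Require Import all_boot all_order all_algebra.
From mathcomp Require Import all_classical all_reals all_analysis.
From mathcomp Require Import lra.
Set Implicit Arguments. Unset Strict Implicit. Unset Printing Implicit Defensive.
Import Order.TTheory GRing.Theory Num.Theory.
Import numFieldNormedType.Exports.
Local Open Scope classical_set_scope.
Local Open Scope ring_scope.
Section Dot.
Variable R : realType.
Variable n : nat.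
Implicit Types u v w : 'rV[R]_n.

Lemma dotpE u v : dotp u v = (u *m v^T) 0 0.
Proof. by rewrite /dotp !mxE; apply: eq_bigr => j _; rewrite mxE. Qed.

Lemma dotpC u v : dotp u v = dotp v u.
Proof. by rewrite /dotp; apply: eq_bigr => j _; rewrite mulrC. Qed.

Lemma dotpDl u v w : dotp (u + v) w = dotp u w + dotp v w.
Proof. by rewrite /dotp -big_split; apply: eq_bigr => j _; rewrite mxE mulrDl. Qed.

Lemma dotpZl (a : R) u v : dotp (a *: u) v = a * dotp u v.
Proof. by rewrite /dotp mulr_sumr; apply: eq_bigr => j _; rewrite mxE mulrA. Qed.

Lemma dotpNl u v : dotp (- u) v = - dotp u v.
Proof. by rewrite -scaleN1r dotpZl mulN1r. Qed.

Lemma dotpBl u v w : dotp (u - v) w = dotp u w - dotp v w.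
Proof. by rewrite dotpDl dotpNl. Qed.

Lemma dotpDr u v w : dotp w (u + v) = dotp w u + dotp w v.
Proof. by rewrite dotpC dotpDl !(dotpC w). Qed.

Lemma dotpBr u v w : dotp w (u - v) = dotp w u - dotp w v.
Proof. by rewrite dotpC dotpBl !(dotpC w). Qed.

Lemma dotpZr (a : R) u v : dotp u (a *: v) = a * dotp u v.
Proof. by rewrite dotpC dotpZl dotpC. Qed.

Lemma dotp_ge0 v : 0 <= dotp v v.
Proof. by rewrite /dotp; apply: sumr_ge0 => j _; rewrite -expr2 sqr_ge0. Qed.

Lemma enorm_sq v : enorm v ^+ 2 = dotp v v.
Proof. by rewrite /enorm sqr_sqrtr // dotp_ge0. Qed.

Lemma enorm_ge0 v : 0 <= enorm v.
Proof. exact: sqrtr_ge0. Qed.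

Lemma enorm_le u v : (enorm u <= enorm v) = (dotp u u <= dotp v v).
Proof. by rewrite /enorm ler_sqrt // dotp_ge0. Qed.

Lemma dotp_expand u v (t : R) :
  dotp (u - t *: v) (u - t *: v) = dotp u u - 2 * t * dotp u v + t ^+ 2 * dotp v v.
Proof.
rewrite dotpBl !dotpBr !dotpZl !dotpZr (dotpC v u).
rewrite expr2; lra.
Qed.

End Dot.
Section Proj.
Variable R : realType.
Local Open Scope convex_scope.

Lemma convE n (x y : convex_lmodType 'rV[R]_n) (p : {i01 R}) :
  x <| p |> y = p%:num *: x + (1 - p%:num) *: y.
Proof. by []. Qed.

Lemma proj_vi n (S : set 'rV[R]_n) x p y :
  convex_set S -> is_proj S x p -> S y -> dotp (x - p) (y - p) <= 0.
Proof.
move=> cS [Sp pmin] Sy.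
set a := dotp (x-p) (y-p); set b := dotp (y-p) (y-p).
have b0 : 0 <= b by apply: dotp_ge0.
have key : forall t, 0 < t -> t <= 1 -> 2 * a <= t * b.
  move=> t t0 t1.
  have St : S (t *: y + (1 - t) *: p).
    have := cS y p (Itv01 (ltW t0) t1).
    rewrite !inE => /(_ Sy Sp); by rewrite convE.
  have := pmin _ St; rewrite enorm_le.
  have -> : x - (t *: y + (1 - t) *: p) = (x - p) - t *: (y - p).
    by rewrite scalerBl scale1r scalerBr addrCA opprD addrA.
  rewrite dotp_expand -/a -/b => h.
  have h' : t * (2 * a) <= t * (t * b) by nra.
  by rewrite ler_pM2l in h'.
case: (lerP a 0) => // a0; exfalso.
have hab : 0 < a + b by lra.
have := key (a / (a + b)).
rewrite divr_gt0 // ler_pdivrMr // mul1r lerDl b0 => /(_ isT isT).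
rewrite mulrAC ler_pdivlMr // => h; nra.
Qed.

Lemma proj_vi_cl n (S : set 'rV[R]_n) x p y :
  convex_set S -> is_proj S x p -> dist y S = 0 -> dotp (x - p) (y - p) <= 0.
Proof.
move=> cS [Sp pmin] dy.
set w := x - p; set a := dotp w (y - p).
case: (lerP a 0) => // a0; exfalso.
set c := dotp w w; have c0 : 0 <= c := dotp_ge0 w.
set s := a / (c + 1).
have s0 : 0 < s by rewrite divr_gt0 //; lra.
have hs : s * (c + 1) = a by rewrite /s mulfVK //; lra.
have [z Sz hz] : exists2 z, S z & enorm (y - z) < Num.sqrt (a * s).
  have ne : [set enorm (y - z) | z in S] !=set0 by exists (enorm (y - p)), p.
  have := @inf_lt R _ (Num.sqrt (a * s)) ne.
  rewrite -/(dist y S) dy sqrtr_gt0 mulr_gt0 // => /(_ isT) [_ [z Sz <-] h].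
  by exists z.
have hv : dotp (y - z) (y - z) < a * s.
  by move: hz; rewrite /enorm ltr_sqrt // mulr_gt0.
have h1 : a <= dotp w (y - z).
  have := proj_vi cS (conj Sp pmin) Sz.
  rewrite /a.
  have -> : y - p = (y - z) + (z - p) by rewrite addrA subrK.
  move=> HH; rewrite dotpDr; lra.
have h2 := dotp_ge0 ((y - z) - s *: w).
rewrite dotp_expand (dotpC (y - z)) -/c in h2.
set D := dotp w (y - z) in h1 h2.
set V := dotp (y - z) (y - z) in hv h2.
have h3 : s * a <= s * D by rewrite ler_pM2l.
have h4 : s * a < s * (s * c) by nra.
rewrite ltr_pM2l // in h4.
nra.
Qed.

Lemma Qplus_convex m (Q : set 'rV[R]_m) : convex_set Q -> convex_set (Qplus Q).
Proof.
move=> cQ z1 z2 l; rewrite !inE => -[y1 [u1 [Q1 [u10 ->]]]] [y2 [u2 [Q2 [u20 ->]]]].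
rewrite convE.
exists (l%:num *: y1 + (1 - l%:num) *: y2), (l%:num *: u1 + (1 - l%:num) *: u2).
split; [|split].
- have := cQ y1 y2 l; rewrite !inE convE; exact.
- move=> i; rewrite !mxE; have l0 : 0 <= l%:num by [].
  have l1 : l%:num <= 1 by [].
  have := u10 i; have := u20 i; nra.
- by rewrite !scalerBr opprD !addrA; congr (_ - _); rewrite addrAC.
Qed.

Lemma Qplus_ne m (Q : set 'rV[R]_m) : Q !=set0 -> Qplus Q !=set0.
Proof. by move=> [y Qy]; exists y, y, 0; split => //; split => [i|]; rewrite ?mxE ?subr0. Qed.

Lemma dotp_delta m (v : 'rV[R]_m) i : dotp v (delta_mx 0 i) = v 0 i.
Proof.
rewrite /dotp (bigD1 i) //= big1 ?addr0 => [|j ji]; rewrite mxE eqxx /=.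
  by rewrite eqxx mulr1.
by rewrite (negbTE ji) mulr0.
Qed.

Lemma proj_Qplus_ge0 m (Q : set 'rV[R]_m) y p i :
  convex_set Q -> is_proj (Qplus Q) y p -> 0 <= (y - p) 0 i.
Proof.
move=> cQ pp.
have Sd : Qplus Q (p - delta_mx 0 i).
  case: pp => [[y1 [u1 [Q1 [u10 ->]]]] _].
  exists y1, (u1 + delta_mx 0 i); split => //; split.
    move=> j; rewrite !mxE; have := u10 j; case: (_ && _) => /=; lra.
  by rewrite opprD addrA.
have := proj_vi (Qplus_convex cQ) pp Sd.
by rewrite addrAC subrr add0r dotpC dotpNl dotpC dotp_delta oppr_le0.
Qed.
End Proj.
Section Grad.
Variable R : realType.

Lemma grad_ineq n m (F : 'rV[R]_n -> 'rV[R]_m) i x y :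
  differentiable F x -> convex_fun (fcomp F i) ->
  ((y - x) *m jacobian F x) 0 i <= fcomp F i y - fcomp F i x.
Proof.
move=> dF cf.
set u := y - x.
have hd : derivable F x u := diff_derivable (v:=u) dF.
have hl : (fun h : R => h^-1 *: ((F \o shift x) (h *: u) - F x)) @ 0^' --> 'D_u F x.
  exact: hd.
rewrite deriveEjacobian // in hl.
have hc : (fun h : R => (h^-1 *: ((F \o shift x) (h *: u) - F x)) 0 i) @ 0^'
   --> (u *m jacobian F x) 0 i.
  apply: (@continuous_cvg _ _ _ _ _ _ (fun M : 'rV[R]_m => M 0 i)) => //.
  exact: coord_continuous.
have sub : (0:R)^'+ `=>` (0:R)^'.
  move=> P /=; rewrite /dnbhs /within /=; apply: filterS => r hr r0.
  by apply: hr; rewrite gt_eqF.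
have hr := cvg_trans (cvg_app _ sub) hc.
apply: (@closed_cvg _ _ _ _ _ (fun r => r <= fcomp F i y - fcomp F i x)
  (closed_le (y:=fcomp F i y - fcomp F i x)) _ _ hr).
near=> h.
have h0 : 0 < h by near: h; exact: nbhs_right_gt.
have h1 : h <= 1 by near: h; apply: nbhs_right_le; exact: ltr01.
rewrite /= !mxE.
have e : h *: u + x = h *: y + (1 - h) *: x.
  by rewrite /u scalerBr scalerBl scale1r addrA addrAC.
rewrite e.
have := cf y x h; rewrite h1 ltW // => /(_ isT).
rewrite /fcomp => hc2.
rewrite ler_pdivrMl //; nra.
Unshelve. all: by end_near.
Qed.

Lemma maxI_ge m (g : 'I_m -> R) i : g i <= maxI g.
Proof.
rewrite /maxI (bigD1 i) //=; by rewrite le_max lexx.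
Qed.

Lemma maxI_le m (g : 'I_m -> R) i0 :
  (forall j, g j <= g i0) -> maxI g <= g i0.
Proof.
move=> hg; rewrite /maxI.
apply: (big_ind (fun v => v <= g i0)) => //.
- have : i0 \in enum 'I_m by rewrite mem_enum.
  case: (enum 'I_m) => //= j _ _; exact: hg.
- by move=> a b ha hb; rewrite ge_max ha hb.
Qed.
End Grad.
Section Main.
Variable R : realType.

Lemma fejer (e s : nat -> R) : (forall k, 0 <= e k) -> (forall k, 0 <= s k) ->
  (forall k, e k.+1 <= e k + s k) -> cvg (series s @ \oo) ->
  cvg (e @ \oo) /\ (forall k, e k <= e 0%N + limn (series s)).
Proof.
move=> e0 s0 he cs.
set S := series s.
have Snd : nondecreasing_seq S.
  by apply/nondecreasing_seqP => k; rewrite /S seriesSr lerDl.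
have Sle := nondecreasing_cvgn_le Snd cs.
set g := fun k => e k - S k.
have gni : nonincreasing_seq g.
  by apply/nonincreasing_seqP => k; rewrite /g /S seriesSr; have := he k; lra.
have glb : has_lbound (range g).
  exists (- limn S) => _ [k _ <-]; rewrite /g; have := e0 k; have := Sle k; lra.
have cg := nonincreasing_is_cvgn gni glb.
split.
  have -> : e = g \+ S by apply/funext => k; rewrite /g /= subrK.
  exact: is_cvgD.
move=> k; have := gni 0%N k (leq0n k); rewrite /g.
have S0 : S 0%N = 0 by rewrite /S /series /= big_geq.
rewrite S0; have := Sle k; lra.
Qed.

Lemma gradi_dot n m (F : 'rV[R]_n -> 'rV[R]_m) i x u :
  dotp (gradi F i x) u = (u *m jacobian F x) 0 i.
Proof.
rewrite /dotp /gradi mxE; apply: eq_bigr => j _; rewrite !mxE mulrC //.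
Qed.

Lemma jacT_dot n m (J : 'M[R]_(n, m)) (rho : 'rV[R]_m) (u : 'rV[R]_n) :
  dotp (rho *m J^T) u = dotp rho (u *m J).
Proof. by rewrite !dotpE trmx_mul mulmxA. Qed.

Lemma dist0 n (y : 'rV[R]_n) S : 2^-1 * dist y S ^+ 2 = 0 -> dist y S = 0.
Proof.
move/eqP; rewrite mulf_eq0 invr_eq0 pnatr_eq0 /= expf_eq0 /=.
by move/eqP.
Qed.

Lemma norm_split n (a b : 'rV[R]_n) :
  dotp (a + b) (a + b) <= 2 * dotp a a + 2 * dotp b b.
Proof.
have h := dotp_ge0 (a - b).
rewrite !dotpBl !dotpBr in h; rewrite !dotpDl !dotpDr.
rewrite (dotpC b a) in h *; lra.
Qed.

End Main.
Unset Implicit Arguments.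

Theorem proposition4 (R : realType) (n m : nat)
  (F : 'rV[R]_n -> 'rV[R]_m) (C : set 'rV[R]_n) (Q : set 'rV[R]_m)
  (r : 'I_m -> R) (mu : R) (alpha beta gamma lambda : nat -> R)
  (alo ahi blo bhi glo ghi : R)
  (x : nat -> 'rV[R]_n) (p : nat -> 'rV[R]_m) (pC : nat -> 'rV[R]_n)
  (istar : nat -> 'I_m) :
  (0 < n)%N -> (0 < m)%N ->
  (forall i, 0 < r i) -> \sum_(i < m) r i = 1 ->
  0 < mu ->
  (* (A1) F is continuously differentiable *)
  (forall y, differentiable F y) -> continuous (jacobian F) ->
  (* (A2) *)
  C !=set0 -> closed C -> convex_set C ->
  Q !=set0 -> closed Q -> convex_set Q ->
  (forall i, has_lbound [set fcomp F i y | y in C]) ->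
  (* (A3) *)
  (forall i, convex_fun (fcomp F i)) ->
  (* (A4) *)
  Omega F C Q r !=set0 ->
  (* (A5) *)
  (forall k, 0 < lambda k) ->
  series lambda @ \oo --> +oo ->
  cvg (series (fun k => lambda k ^+ 2) @ \oo) ->
  (* (A6) *)
  0 < alo -> 0 < blo -> 0 < glo ->
  (forall k, alo <= alpha k <= ahi) ->
  (forall k, blo <= beta k <= bhi) ->
  (forall k, glo <= gamma k <= ghi) ->
  (* (A7) *)
  phi_lb F C r = phistar F C Q r ->
  (* the ABP iteration *)
  (forall k, is_proj (Qplus Q) (F (x k)) (p k)) ->
  (forall k, is_proj C (x k) (pC k)) ->
  (forall k j, r j * (fcomp F j (x k) - zstar F C j)
               <= r (istar k) * (fcomp F (istar k) (x k) - zstar F C (istar k))) ->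
  (forall k,
     let d := abp_dir F C r (alpha k) (beta k) (gamma k) (x k) (p k) (pC k) (istar k) in
     x k.+1 = x k - (lambda k / Num.max mu (enorm d)) *: d) ->
  (forall xs, Omega F C Q r xs ->
     cvg ((fun k => enorm (x k - xs) ^+ 2) @ \oo)) /\
  (exists M, forall k, enorm (x k) <= M).
Proof.
move=> n0 m0 r0 rsum mu0 dF cJ Cne Ccl Ccv Qne Qcl Qcv lbF cvxF Omne lam0 lamoo lam2
  alo0 blo0 glo0 ha hb hg A7 hp hpC hist hx.
have key : forall xs, Omega F C Q r xs -> forall k,
    dotp (x k.+1 - xs) (x k.+1 - xs) <= dotp (x k - xs) (x k - xs) + lambda k ^+ 2.
  move=> xs [[Hxs Gxs] phixs] k.
  set d := abp_dir F C r (alpha k) (beta k) (gamma k) (x k) (p k) (pC k) (istar k).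
  have ek : x k.+1 = x k - (lambda k / Num.max mu (enorm d)) *: d := hx k.
  rewrite ek.
  set t := lambda k / Num.max mu (enorm d).
  set u := x k - xs.
  have mx0 : 0 < Num.max mu (enorm d) by rewrite lt_max mu0.
  have t0 : 0 < t by rewrite /t divr_gt0.
  have -> : x k - t *: d - xs = u - t *: d by rewrite addrAC.
  rewrite dotp_expand.
  have htd : t ^+ 2 * dotp d d <= lambda k ^+ 2.
    rewrite -enorm_sq -exprMn.
    have te : t * enorm d <= lambda k.
      rewrite /t mulrAC ler_pdivrMr // ler_pM2l //.
      by rewrite le_max lexx orbT.
    have := mulr_ge0 (ltW t0) (enorm_ge0 d); move: te.
    set q := t * enorm d; move=> te q0; nra.
  set J := jacobian F (x k).
  have gi : forall i, fcomp F i (x k) - fcomp F i xs <= (u *m J) 0 i.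
    move=> i; have := @grad_ineq R n m F i (x k) xs (dF _) (cvxF i).
    by rewrite -/J -opprB /u mulNmx mxE lerNl opprB.
  have hZ : 0 <= dotp (x k - pC k) u.
    have hh := proj_vi_cl Ccv (hpC k) (dist0 Hxs).
    have -> : u = (x k - pC k) - (xs - pC k) by rewrite opprB addrA subrK.
    rewrite dotpBr; have := dotp_ge0 (x k - pC k); lra.
  have hV : 0 <= dotp ((F (x k) - p k) *m J^T) u.
    rewrite jacT_dot.
    have h1 : 0 <= dotp (F (x k) - p k) (F (x k) - F xs).
      have hh := proj_vi_cl (Qplus_convex Qcv) (hp k) (dist0 Gxs).
      have -> : F (x k) - F xs = (F (x k) - p k) - (F xs - p k) by rewrite opprB addrA subrK.
      rewrite dotpBr; have := dotp_ge0 (F (x k) - p k); lra.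
    apply: (le_trans h1); rewrite /dotp; apply: ler_sum => i _.
    apply: ler_wpM2l; first exact: (proj_Qplus_ge0 i Qcv (hp k)).
    apply: le_trans (gi i); by rewrite !mxE /fcomp.
  have hW : 0 <= (if 0 <= varphi F C r (x k) - phi_lb F C r then alpha k else 0)
                 * (r (istar k) * dotp (gradi F (istar k) (x k)) u).
    case: ifP => hc; last by rewrite mul0r.
    apply: mulr_ge0; first by have := ha k; lra.
    rewrite gradi_dot -/J.
    set i := istar k.
    have v1 : varphi F C r (x k) <= r i * (fcomp F i (x k) - zstar F C i).
      exact: maxI_le (hist k).
    have v2 : r i * (fcomp F i xs - zstar F C i) <= varphi F C r xs.
      exact: (maxI_ge (fun j => r j * (fcomp F j xs - zstar F C j)) i).
    have := gi i; have := r0 i; rewrite A7 in hc; rewrite phixs in v2.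
    move: hc v1 v2; set a1 := fcomp F i (x k); set a2 := fcomp F i xs.
    set z := zstar F C i; set ri := r i; set g := (u *m J) 0 i.
    move=> hc v1 v2 ri0 hg'.
    nra.
  have hdu : 0 <= dotp u d.
    rewrite dotpC /d /abp_dir /= !dotpDl !dotpZl.
    have := hb k; have := hg k; move: hZ hV hW.
    set Z := dotp _ u; set V := dotp _ u; set W := (if _ then _ else _) * _.
    move=> hZ hV hW h1 h2.
    have : 0 <= beta k * Z by apply: mulr_ge0 => //; lra.
    have : 0 <= gamma k * V by apply: mulr_ge0 => //; lra.
    lra.
  have : 0 <= 2 * t * dotp u d by rewrite mulr_ge0 // mulr_ge0 // ltW.
  lra.
split.
  move=> xs hxs.
  have [cv _] := fejer (e := fun k => dotp (x k - xs) (x k - xs))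
    (fun k => dotp_ge0 _) (fun k => sqr_ge0 (lambda k)) (key xs hxs) lam2.
  have -> : (fun k => enorm (x k - xs) ^+ 2) = (fun k => dotp (x k - xs) (x k - xs)).
    by apply/funext => k; rewrite enorm_sq.
  exact: cv.
case: Omne => xs hxs.
have [_ bd] := fejer (e := fun k => dotp (x k - xs) (x k - xs))
    (fun k => dotp_ge0 _) (fun k => sqr_ge0 (lambda k)) (key xs hxs) lam2.
set B := _ + limn _ in bd.
exists (1 + 2 * B + 2 * dotp xs xs) => k.
have h1 := norm_split (x k - xs) xs.
rewrite subrK in h1.
have h2 := bd k.
have h3 := enorm_sq (x k).
have h4 := enorm_ge0 (x k).
nra.
Qed.
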